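(* Let $N\ge 1$ and let $i,j,k\in\{1,\dots,N\}$. For an $N^3\times N^3$ matrix $\mathbf{M}$ with rows and columns indexed by three-letter words over $\{1,\dots,N\}$, let $\mathbf{M}_{[i,j,k]}$ denote the submatrix consisting of the rows and columns whose labels are rearrangements of the multiset $[i,j,k]$ (in lexicographic order), and let $n$ be the number of such rearrangements. Then for pairwise distinct indices $\alpha,\beta,\gamma$: (a) $(\mathbf{R}_{\beta\alpha}\otimes\mathbf{I}_N)_{[i,j,k]}(\mathbf{R}_{\alpha\beta}\otimes\mathbf{I}_N)_{[i,j,k]}=(\mathbf{I}_N\otimes\mathbf{R}_{\beta\alpha})_{[i,j,k]}(\mathbf{I}_N\otimes\mathbf{R}_{\alpha\beta})_{[i,j,k]}=\mathbf{I}_n$; (b) $(\mathbf{R}_{\gamma\beta}\otimes\mathbf{I}_N)_{[i,j,k]}(\mathbf{I}_N\otimes\mathbf{R}_{\gamma\alpha})_{[i,j,k]}(\mathbf{R}_{\beta\alpha}\otimes\mathbf{I}_N)_{[i,j,k]}=(\mathbf{I}_N\otimes\mathbf{R}_{\beta\alpha})_{[i,j,k]}(\mathbf{R}_{\gamma\alpha}\otimes\mathbf{I}_N)_{[i,j,k]}(\mathbf{I}_N\otimes\mathbf{R}_{\gamma\beta})_{[i,j,k]}$.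
   Context: Fix $0<p<1$, $q=1-p$. For nonzero complex $\xi_\alpha,\xi_\beta$ set $D=p+q\xi_\alpha\xi_\beta-\xi_\alpha$ and $S_{\beta\alpha}=-\frac{p+q\xi_\alpha\xi_\beta-\xi_\beta}{D}$, $P_{\beta\alpha}=\frac{(p-q\xi_\alpha)(\xi_\beta-1)}{D}$, $Q_{\beta\alpha}=\frac{(p-q\xi_\beta)(\xi_\alpha-1)}{D}$, $T_{\beta\alpha}=\frac{\xi_\beta-\xi_\alpha}{D}$. $\mathbf{R}_{\beta\alpha}$ is the $N^2\times N^2$ matrix with rows and columns indexed by two-letter words $ij$ over $\{1,\dots,N\}$ in lexicographic order, with entries $[\mathbf{R}_{\beta\alpha}]_{ij,kl}=S_{\beta\alpha}$ if $kl=ij$, $i=j$; $P_{\beta\alpha}$ if $kl=ij$, $i<j$; $Q_{\beta\alpha}$ if $kl=ij$, $i>j$; $pT_{\beta\alpha}$ if $kl=ji$, $i<j$; $qT_{\beta\alpha}$ if $kl=ji$, $i>j$; and $0$ otherwise. $\otimes$ is the Kronecker product, with rows/columns of $N^3\times N^3$ matrices indexed by three-letter words in lexicographic order. *)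

(* Defs.v *)
From HB Require Import structures.
From mathcomp Require Import all_boot all_order all_algebra.
Set Implicit Arguments. Unset Strict Implicit. Unset Printing Implicit Defensive.
Import Order.TTheory GRing.Theory Num.Theory.
Local Open Scope ring_scope.

(* Letters of words are 0-based: the letter a in {1..N} of the paper is a-1 here,
   a nat in [0, N).  Words are tuples of nats.  All definitions are over an
   arbitrary numClosedFieldType C (e.g. the complex numbers). *)

Section RMat.
Variable C : numClosedFieldType.
Variable p : C.
Definition qq : C := 1 - p.

(* xa = xi_alpha, xb = xi_beta; the following are S_{beta alpha}, etc. *)
Definition Dd (xa xb : C) : C := p + qq * xa * xb - xa.
Definition Sc (xa xb : C) : C := - (p + qq * xa * xb - xb) / Dd xa xb.
Definition Pc (xa xb : C) : C := (p - qq * xa) * (xb - 1) / Dd xa xb.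
Definition Qc (xa xb : C) : C := (p - qq * xb) * (xa - 1) / Dd xa xb.
Definition Tc (xa xb : C) : C := (xb - xa) / Dd xa xb.

(* entry [R_{beta alpha}]_{ij,kl}, with xa = xi_alpha, xb = xi_beta *)
Definition Rent (xa xb : C) (i j k l : nat) : C :=
  if (k == i) && (l == j) then
    (if i == j then Sc xa xb else if (i < j)%N then Pc xa xb else Qc xa xb)
  else if (k == j) && (l == i) then
    (if (i < j)%N then p * Tc xa xb else qq * Tc xa xb)
  else 0.

Definition word3 := (nat * nat * nat)%type.

(* entries of R_{beta alpha} (x) I_N  and  I_N (x) R_{beta alpha} (Kronecker product,
   lexicographic indexing by three-letter words) *)
Definition RI (xa xb : C) (w v : word3) : C :=
  let: (a, b, c) := w in let: (a', b', c') := v in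
  Rent xa xb a b a' b' * (c == c')%:R.
Definition IR (xa xb : C) (w v : word3) : C :=
  let: (a, b, c) := w in let: (a', b', c') := v in
  (a == a')%:R * Rent xa xb b c b' c'.
End RMat.

Definition words3 (N : nat) : seq word3 :=
  flatten [seq [seq (a, b, c) | b <- iota 0 N, c <- iota 0 N] | a <- iota 0 N].

Definition rearr (N i j k : nat) : seq word3 :=
  [seq w <- words3 N | perm_eq [:: w.1.1; w.1.2; w.2] [:: i; j; k]].

Definition subM (C : numClosedFieldType) (N i j k : nat) (M : word3 -> word3 -> C)
  : 'M[C]_(size (rearr N i j k)) :=
  \matrix_(r, s) M (nth (0, 0, 0)%N (rearr N i j k) r) (nth (0, 0, 0)%N (rearr N i j k) s).

(* Main.v *)
Require Import Defs.
From mathcomp Require Import all_boot all_order all_algebra.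
From mathcomp Require Import ring zify.
Import Order.TTheory GRing.Theory Num.Theory.
Set Implicit Arguments. Unset Strict Implicit.
Local Open Scope ring_scope.


Lemma mem_words3 N (w : word3) :
  (w \in words3 N) = [&& (w.1.1 < N)%N, (w.1.2 < N)%N & (w.2 < N)%N].
Proof.
case: w => [[a b] c] /=; rewrite /words3.
apply/flatten_mapP/idP.
  move=> [a' ha' /allpairsP [[b' c'] /= [hb hc [-> -> ->]]]].
  by move: ha' hb hc; rewrite !mem_iota /= !add0n => -> -> ->.
move=> /and3P [ha hb hc]; exists a; first by rewrite mem_iota /= add0n.
by apply/allpairsP; exists (b, c); rewrite !mem_iota /= !add0n hb hc.
Qed.

Lemma uniq_words3 N : uniq (words3 N).
Proof.
have -> : words3 N = [seq u | a <- iota 0 N,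
   u <- [seq (a, b, c) | b <- iota 0 N, c <- iota 0 N]].
  by rewrite /words3; congr flatten; apply: eq_map => a; rewrite map_id.
apply: allpairs_uniq_dep; first exact: iota_uniq.
  move=> a _; apply: allpairs_uniq; try exact: iota_uniq.
  by move=> [b c] [b' c'] _ _ /= [-> ->].
move=> [a u] [a' u'] /allpairsPdep [x [y [_ hy [-> ->]]]]
   /allpairsPdep [x' [y' [_ hy' [-> ->]]]] /= eyy.
move: hy hy' eyy => /allpairsP [[b c] [_ _ ->]] /allpairsP [[b' c'] [_ _ ->]] /=.
by case=> -> -> ->.
Qed.

Lemma uniq_rearr N i j k : uniq (rearr N i j k).
Proof. exact/filter_uniq/uniq_words3. Qed.

Lemma mem_rearr N i j k w : (w \in rearr N i j k) =
  (w \in words3 N) && perm_eq [:: w.1.1; w.1.2; w.2] [:: i; j; k].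
Proof. by rewrite mem_filter andbC. Qed.

Definition mulF (C : numClosedFieldType) (s : seq word3) (A B : word3 -> word3 -> C) w v :=
  \sum_(u <- s) A w u * B u v.

Section Gen.
Variable C : numClosedFieldType.
Implicit Types A B D F G : word3 -> word3 -> C.

Lemma subM_mul N i j k A B :
  subM N i j k A *m subM N i j k B = subM N i j k (mulF (rearr N i j k) A B).
Proof.
apply/matrixP => r s; rewrite !mxE /mulF (big_nth (0,0,0)%N) big_mkord.
by apply: eq_bigr => t _; rewrite !mxE.
Qed.

Lemma subM_ext N i j k F G :
  {in rearr N i j k &, forall w v, F w v = G w v} ->
  subM N i j k F = subM N i j k G.
Proof. by move=> h; apply/matrixP => r s; rewrite !mxE h // mem_nth. Qed.

Lemma subM_1 N i j k :
  1%:M = subM N i j k (fun w v => (w == v)%:R) :> 'M[C]_(size (rearr N i j k)).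
Proof.
apply/matrixP => r s; rewrite !mxE nth_uniq ?uniq_rearr //.
Qed.

Definition gw (g : nat -> nat) (w : word3) : word3 := (g w.1.1, g w.1.2, g w.2).

Variable g : nat -> nat.
Hypothesis gmono : {mono g : x y / (x < y)%N}.

Lemma g_inj : injective g.
Proof.
move=> x y e; case: (ltngtP x y) => // h.
  by move: h; rewrite -gmono e ltnn.
by move: h; rewrite -gmono e ltnn.
Qed.

Lemma gw_inj : injective (gw g).
Proof.
by move=> [[a b] c] [[a' b'] c'] [/g_inj -> /g_inj -> /g_inj ->].
Qed.

Lemma Rent_g p xa xb i j k l :
  Rent p xa xb (g i) (g j) (g k) (g l) = Rent p xa xb i j k l :> C.
Proof. by rewrite /Rent !(inj_eq g_inj) !gmono. Qed.

Lemma RI_g p xa xb w v : RI p xa xb (gw g w) (gw g v) = RI p xa xb w v :> C.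
Proof.
by case: w => [[a b] c]; case: v => [[a' b'] c']; rewrite /RI /= Rent_g (inj_eq g_inj).
Qed.

Lemma IR_g p xa xb w v : IR p xa xb (gw g w) (gw g v) = IR p xa xb w v :> C.
Proof.
by case: w => [[a b] c]; case: v => [[a' b'] c']; rewrite /IR /= Rent_g (inj_eq g_inj).
Qed.

Lemma rearr_perm N (i j k i0 j0 k0 : nat) :
  (i0 < 3)%N -> (j0 < 3)%N -> (k0 < 3)%N ->
  (i < N)%N -> (j < N)%N -> (k < N)%N ->
  perm_eq [:: i; j; k] [:: g i0; g j0; g k0] ->
  perm_eq (rearr N i j k) (map (gw g) (rearr 3 i0 j0 k0)).
Proof.
move=> hi0 hj0 hk0 hi hj hk hp.
apply: uniq_perm; first exact: uniq_rearr.
  by rewrite (map_inj_uniq gw_inj) uniq_rearr.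
have memN x : x \in [:: i; j; k] -> (x < N)%N.
  by rewrite !inE => /or3P [] /eqP ->.
have mem3 x : x \in [:: i0; j0; k0] -> (x < 3)%N.
  by rewrite !inE => /or3P [] /eqP ->.
have hpg : perm_eq [:: i; j; k] (map g [:: i0; j0; k0]) by [].
move=> [[x y] z]; rewrite mem_rearr mem_words3 /=; apply/idP/idP.
  move=> /andP [_ hxyz].
  have hq := perm_trans hxyz hpg.
  have : x \in map g [:: i0; j0; k0] by rewrite -(perm_mem hq) inE eqxx.
  move=> /mapP [x0 hx0 Ex].
  have : y \in map g [:: i0; j0; k0] by rewrite -(perm_mem hq) !inE eqxx orbT.
  move=> /mapP [y0 hy0 Ey].
  have : z \in map g [:: i0; j0; k0] by rewrite -(perm_mem hq) !inE eqxx !orbT.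
  move=> /mapP [z0 hz0 Ez].
  rewrite Ex Ey Ez in hq *.
  have -> : (g x0, g y0, g z0) = gw g (x0, y0, z0) by [].
  rewrite (mem_map gw_inj) mem_rearr mem_words3 /= !mem3 //=.
  exact: (@perm_map_inj _ _ g g_inj [:: x0; y0; z0] [:: i0; j0; k0] hq).
move=> /mapP [[[x0 y0] z0]]; rewrite mem_rearr mem_words3 /= => /andP [_ h0] [-> -> ->].
have hq : perm_eq [:: g x0; g y0; g z0] [:: i; j; k].
  by rewrite perm_sym (perm_trans hpg) // perm_sym (perm_map g h0).
by rewrite hq andbT !memN // -(perm_mem hq) !inE eqxx ?orbT.
Qed.

Lemma transfer1 s L0 A B w0 v0 :
  (forall w v, A (gw g w) (gw g v) = A w v) ->
  (forall w v, B (gw g w) (gw g v) = B w v) ->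
  perm_eq s (map (gw g) L0) ->
  mulF s A B (gw g w0) (gw g v0) = mulF L0 A B w0 v0.
Proof.
move=> hA hB hs; rewrite /mulF (perm_big _ hs) big_map.
by apply: eq_bigr => u _; rewrite hA hB.
Qed.

Lemma transfer2 s L0 A B D w0 v0 :
  (forall w v, A (gw g w) (gw g v) = A w v) ->
  (forall w v, B (gw g w) (gw g v) = B w v) ->
  (forall w v, D (gw g w) (gw g v) = D w v) ->
  perm_eq s (map (gw g) L0) ->
  mulF s (mulF s A B) D (gw g w0) (gw g v0) = mulF L0 (mulF L0 A B) D w0 v0.
Proof.
move=> hA hB hD hs; rewrite /mulF (perm_big _ hs) big_map.
apply: eq_bigr => u _; rewrite hD; congr (_ * _).
by rewrite (perm_big _ hs) big_map; apply: eq_bigr => u' _; rewrite hA hB.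
Qed.

End Gen.


Ltac dest H := repeat (case/predU1P: H => [->|H]); try (rewrite ?in_nil in H; discriminate H).
Ltac conc := let w := fresh "w" in let v := fresh "v" in
  let hw := fresh "hw" in let hv := fresh "hv" in
  move=> w v hw hv;
  rewrite /mulF !big_cons !big_nil /RI /IR /Rent;
  dest hw; dest hv; rewrite /=;
  rewrite /Sc /Pc /Qc /Tc /Dd /qq;
  first [field | reflexivity]; repeat match goal with H : is_true (?a != 0) |- context [?a != 0] => rewrite H end; done.

Definition concP (C : numClosedFieldType) (L : seq word3) :=
  forall (p xa xb xc : C),
  (Dd p xa xb != 0 -> Dd p xb xa != 0 ->
    (forall w v, w \in L -> v \in L -> mulF L (RI p xa xb) (RI p xb xa) w v = (w == v)%:R) /\
    (forall w v, w \in L -> v \in L -> mulF L (IR p xa xb) (IR p xb xa) w v = (w == v)%:R)) /\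
  (Dd p xb xc != 0 -> Dd p xa xc != 0 -> Dd p xa xb != 0 ->
   forall w v, w \in L -> v \in L ->
   mulF L (mulF L (RI p xb xc) (IR p xa xc)) (RI p xa xb) w v =
   mulF L (mulF L (IR p xa xb) (RI p xa xc)) (IR p xb xc) w v).

Lemma conc012 C : concP C (rearr 3 0 1 2).
Proof.
have -> : rearr 3 0 1 2 = [:: (0,1,2); (0,2,1); (1,0,2); (1,2,0); (2,0,1); (2,1,0)]%N by [].
move=> p xa xb xc; split.
  move=> h1 h2; have h3 := h1; move: h1 h2 h3; rewrite /Dd /qq => h1 h2 h3.
  split; conc.
move=> h1 h2 h3; move: h1 h2 h3; rewrite /Dd /qq => h1 h2 h3; conc.
Qed.

Lemma conc001 C : concP C (rearr 3 0 0 1).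
Proof.
have -> : rearr 3 0 0 1 = [:: (0,0,1); (0,1,0); (1,0,0)]%N by [].
move=> p xa xb xc; split.
  move=> h1 h2; have h3 := h1; move: h1 h2 h3; rewrite /Dd /qq => h1 h2 h3.
  split; conc.
move=> h1 h2 h3; move: h1 h2 h3; rewrite /Dd /qq => h1 h2 h3; conc.
Qed.

Lemma conc011 C : concP C (rearr 3 0 1 1).
Proof.
have -> : rearr 3 0 1 1 = [:: (0,1,1); (1,0,1); (1,1,0)]%N by [].
move=> p xa xb xc; split.
  move=> h1 h2; have h3 := h1; move: h1 h2 h3; rewrite /Dd /qq => h1 h2 h3.
  split; conc.
move=> h1 h2 h3; move: h1 h2 h3; rewrite /Dd /qq => h1 h2 h3; conc.
Qed.

Lemma conc000 C : concP C (rearr 3 0 0 0).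
Proof.
have -> : rearr 3 0 0 0 = [:: (0,0,0)]%N by [].
move=> p xa xb xc; split.
  move=> h1 h2; have h3 := h1; move: h1 h2 h3; rewrite /Dd /qq => h1 h2 h3.
  split; conc.
move=> h1 h2 h3; move: h1 h2 h3; rewrite /Dd /qq => h1 h2 h3; conc.
Qed.


Lemma main_gen (C : numClosedFieldType) (g : nat -> nat)
  (gmono : {mono g : x y / (x < y)%N}) (i0 j0 k0 : nat) :
  concP C (rearr 3 i0 j0 k0) -> (i0 < 3)%N -> (j0 < 3)%N -> (k0 < 3)%N ->
  forall N (i j k : nat), (i < N)%N -> (j < N)%N -> (k < N)%N ->
  perm_eq [:: i; j; k] [:: g i0; g j0; g k0] ->
  forall (p xa xb xc : C),
  (Dd p xa xb != 0 -> Dd p xb xa != 0 ->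
     subM N i j k (RI p xa xb) *m subM N i j k (RI p xb xa) = 1%:M /\
     subM N i j k (IR p xa xb) *m subM N i j k (IR p xb xa) = 1%:M)
  /\
  (Dd p xb xc != 0 -> Dd p xa xc != 0 -> Dd p xa xb != 0 ->
     subM N i j k (RI p xb xc) *m subM N i j k (IR p xa xc) *m subM N i j k (RI p xa xb)
     = subM N i j k (IR p xa xb) *m subM N i j k (RI p xa xc) *m subM N i j k (IR p xb xc)).
Proof.
move=> hc hi0 hj0 hk0 N i j k hi hj hk hp p xa xb xc.
have hs := rearr_perm gmono hi0 hj0 hk0 hi hj hk hp.
have memg w : w \in rearr N i j k -> exists2 w0, w0 \in rearr 3 i0 j0 k0 & w = gw g w0.
  by rewrite (perm_mem hs) => /mapP.
have [hca hcb] := hc p xa xb xc.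
split.
  move=> h1 h2; have [ha1 ha2] := hca h1 h2.
  split; rewrite subM_mul subM_1; apply: subM_ext => w v hw hv;
    have [w0 hw0 ->] := memg w hw; have [v0 hv0 ->] := memg v hv;
    rewrite (inj_eq (gw_inj gmono)).
    by rewrite (transfer1 _ _ (RI_g gmono p xa xb) (RI_g gmono p xb xa) hs) ha1.
  by rewrite (transfer1 _ _ (IR_g gmono p xa xb) (IR_g gmono p xb xa) hs) ha2.
move=> h1 h2 h3; rewrite !subM_mul; apply: subM_ext => w v hw hv.
have [w0 hw0 ->] := memg w hw; have [v0 hv0 ->] := memg v hv.
rewrite (transfer2 _ _ (RI_g gmono p xb xc) (IR_g gmono p xa xc) (RI_g gmono p xa xb) hs).
rewrite (transfer2 _ _ (IR_g gmono p xa xb) (RI_g gmono p xa xc) (IR_g gmono p xb xc) hs).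
exact: hcb.
Qed.

Lemma mono_of (g : nat -> nat) :
  (forall x y, (x < y)%N -> (g x < g y)%N) -> {mono g : x y / (x < y)%N}.
Proof.
move=> h x y; apply/idP/idP => [hg|/h //].
case: (ltngtP x y) => // [yx|exy].
  by move: (h _ _ yx) hg; lia.
by rewrite exy ltnn in hg.
Qed.

Theorem mainTheorem3 (C : numClosedFieldType) (p : C) (N : nat) (i j k : 'I_N)
    (xa xb xc : C) :
  0 < p -> p < 1 -> (1 <= N)%N ->
  xa != 0 -> xb != 0 -> xc != 0 ->
  (* (a): R_{beta alpha} and R_{alpha beta} are defined *)
  (Dd p xa xb != 0 -> Dd p xb xa != 0 ->
     subM N i j k (RI p xa xb) *m subM N i j k (RI p xb xa) = 1%:M /\
     subM N i j k (IR p xa xb) *m subM N i j k (IR p xb xa) = 1%:M)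
  /\
  (* (b): R_{gamma beta}, R_{gamma alpha}, R_{beta alpha} are defined *)
  (Dd p xb xc != 0 -> Dd p xa xc != 0 -> Dd p xa xb != 0 ->
     subM N i j k (RI p xb xc) *m subM N i j k (IR p xa xc) *m subM N i j k (RI p xa xb)
     = subM N i j k (IR p xa xb) *m subM N i j k (RI p xa xc) *m subM N i j k (IR p xb xc)).
Proof.
move=> _ _ _ _ _ _.
have hperm : perm_eq [:: (i : nat); (j : nat); (k : nat)] (sort leq [:: (i : nat); (j : nat); (k : nat)]).
  by rewrite perm_sym perm_sort.
have hsort := sort_sorted leq_total [:: (i : nat); (j : nat); (k : nat)].
have hsz := size_sort leq [:: (i : nat); (j : nat); (k : nat)].
move: hperm hsort hsz.
case: (sort _ _) => [|a [|b [|c [|]]]] //= hperm /andP [hab /andP [hbc _]] _.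
have hi := ltn_ord i; have hj := ltn_ord j; have hk := ltn_ord k.
have [ab|ab] : (a < b)%N \/ a = b by lia.
  have [bc|bc] : (b < c)%N \/ b = c by lia.
    pose g n := if n == 0%N then a else if n == 1%N then b else (n.-2 + c)%N.
    have gm : {mono g : x y / (x < y)%N}.
      by apply: mono_of => x y; rewrite /g; case: x => [|[|x]]; case: y => [|[|y]] //=; lia.
    exact: (main_gen gm (@conc012 C) erefl erefl erefl hi hj hk hperm).
  subst c.
  pose g n := if n == 0%N then a else (n.-1 + b)%N.
  have gm : {mono g : x y / (x < y)%N}.
    by apply: mono_of => x y; rewrite /g; case: x => [|x]; case: y => [|y] //=; lia.
  exact: (main_gen gm (@conc011 C) erefl erefl erefl hi hj hk hperm).
subst b.
have [bc|bc] : (a < c)%N \/ a = c by lia.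
  pose g n := if n == 0%N then a else (n.-1 + c)%N.
  have gm : {mono g : x y / (x < y)%N}.
    by apply: mono_of => x y; rewrite /g; case: x => [|x]; case: y => [|y] //=; lia.
  exact: (main_gen gm (@conc001 C) erefl erefl erefl hi hj hk hperm).
subst c.
pose g n := (n + a)%N.
have gm : {mono g : x y / (x < y)%N}.
  by apply: mono_of => x y /=; rewrite /g; lia.
exact: (main_gen gm (@conc000 C) erefl erefl erefl hi hj hk hperm).
Qed.
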